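(* Let $S=\operatorname{Sys}(A,B,C)$ be a $(U,X,Y)$-relation with $A$ bounded (so $C:X\to Y$ is bounded), and suppose $\|e^{At}\|\le ae^{-\alpha t}$ for all $t\ge0$, for some $a\ge1$ and $\alpha\in\mathbb{R}$. Then for all $\beta<\alpha$ the $\beta$-IS-$(0,1)$-gain $h(\beta)$ and the $\beta$-IO-$(0,1)$-gain $g(\beta)$ of $S$ satisfy $$h(\beta)\le\max\left(\frac{a\|B\|}{\alpha-\beta},\ \frac{a\|B\|\|A\|}{\alpha-\beta}+\|B\|\right),\qquad g(\beta)\le\max\left(\frac{a\|B\|\|C\|}{\alpha-\beta},\ \frac{a\|B\|\|A\|\|C\|}{\alpha-\beta}+\|B\|\|C\|\right).$$
   Context: A $(U,X,Y)$-relation is a subset of $C^0(\mathbb{R}_{\ge 0},U)\times C^0(\mathbb{R}_{\ge 0},X)\times C^0(\mathbb{R}_{\ge 0},Y)$. For $A$ generating a strongly continuous semigroup on $X$, bounded $B:U\to X$ and $C:\operatorname{Dom}(A)\to Y$ bounded in the graph norm, $\operatorname{Sys}(A,B,C)$ is the relation of all $(u,x,y)$ with $u\in C^0(\mathbb{R}_{\ge0},U)$, $x\in C^0(\mathbb{R}_{\ge0},\operatorname{Dom}(A))\cap C^1(\mathbb{R}_{\ge0},X)$, $y\in C^0(\mathbb{R}_{\ge0},Y)$, $\dot x=Ax+Bu$, $y=Cx$. Gains: fix $\beta\in\mathbb{R}$, $n,m\in\mathbb{Z}_{\ge0}$. Provided every $(u,x,y)\in S$ with $u\in C^n$ has $y\in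 C^m$, the $\beta$-IO-$(n,m)$-gain of $S$ is the infimum of all $\alpha\ge0$ for which there is a function $b:S\to\mathbb{R}_{\ge0}$ with $\|e^{\beta t}\partial_t^k y(t)\|\le\alpha\max_{0\le j\le n}\|e^{\beta s}\partial_s^j u(s)\|_{L^\infty([0,t],U)}+b(u,x,y)$ for all $k\in\{0,\dots,m\}$, $t\ge0$, and $(u,x,y)\in S$ with $u\in C^n$. The $\beta$-IS-$(n,m)$-gain is defined the same way with $\partial_t^k x(t)$ in place of $\partial_t^k y(t)$. *)

(* Defs.v *)
From HB Require Import structures.
From mathcomp Require Import all_boot all_order all_algebra.
From mathcomp Require Import all_classical all_reals all_analysis.
Set Implicit Arguments. Unset Strict Implicit. Unset Printing Implicit Defensive.
Import Order.TTheory GRing.Theory Num.Theory.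
Import numFieldNormedType.Exports.
Local Open Scope classical_set_scope.
Local Open Scope ring_scope.

Section Defs.
Variable R : realType.

Definition opnorm (V W : normedModType R) (f : V -> W) : R :=
  inf [set M : R | 0 <= M /\ forall x, `|f x| <= M * `|x|].

Definition expop (X : completeNormedModType R) (A : X -> X) (t : R) (x : X) : X :=
  limn (series (fun k => (t ^+ k / k`!%:R) *: iter k A x)).

Definition has_deriv_nonneg (V : normedModType R) (f : R -> V) (t : R) (d : V) : Prop :=
  (fun h : R => h^-1 *: (f (t + h) - f t))
    @ within (fun h : R => h != 0 /\ 0 <= t + h) (nbhs (0 : R)) --> d.

Definition is_Ck (V : normedModType R) (k : nat) (f : R -> V) (ds : nat -> R -> V) : Prop :=
  [/\ (forall t, 0 <= t -> ds 0%N t = f t),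
      (forall j, (j <= k)%N -> {within `[(0:R), +oo[, continuous (ds j)}) &
      (forall j, (j < k)%N -> forall t, 0 <= t -> has_deriv_nonneg (ds j) t (ds j.+1 t))].

Definition Ck (V : normedModType R) (k : nat) (f : R -> V) : Prop :=
  exists ds, is_Ck k f ds.

(* functions on R_{>=0} are represented by functions R -> V (values on t<0 irrelevant) *)
Definition relation (U X Y : normedModType R) := set ((R -> U) * (R -> X) * (R -> Y)).

Definition Sys (U : normedModType R) (X : completeNormedModType R) (Y : normedModType R)
  (A : X -> X) (B : U -> X) (C : X -> Y) : relation U X Y :=
  [set s | let: (u, x, y) := s in
    [/\ {within `[(0:R), +oo[, continuous u},
        {within `[(0:R), +oo[, continuous x},
        {within `[(0:R), +oo[, continuous (A \o x)},
        {within `[(0:R), +oo[, continuous y} &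
        exists dx : R -> X,
          [/\ {within `[(0:R), +oo[, continuous dx},
              (forall t, 0 <= t -> has_deriv_nonneg x t (dx t)),
              (forall t, 0 <= t -> dx t = A (x t) + B (u t)) &
              (forall t, 0 <= t -> y t = C (x t))]]].

(* max_{0<=j<=n} || e^{beta s} d^j u(s) ||_{L^infty([0,t])}  (u continuous, so sup) *)
Definition Linf_max (U : normedModType R) (n : nat) (du : nat -> R -> U) (beta t : R) : R :=
  \big[Num.max/0]_(j < n.+1)
     sup [set `|expR (beta * s) *: du j s| | s in `[(0:R), t]].

Definition gain (U X Y W : normedModType R)
  (pick : (R -> U) * (R -> X) * (R -> Y) -> R -> W)
  (beta : R) (n m : nat) (S : relation U X Y) : \bar R :=
  if `[< forall s, S s -> Ck n s.1.1 -> Ck m (pick s) >] then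
    ereal_inf [set alpha%:E | alpha in
      [set alpha : R | 0 <= alpha /\
        exists b : (R -> U) * (R -> X) * (R -> Y) -> R,
          (forall s, S s -> 0 <= b s) /\
          forall s, S s -> forall du, is_Ck n s.1.1 du ->
            forall dw, is_Ck m (pick s) dw ->
            forall k, (k <= m)%N -> forall t, 0 <= t ->
              `|expR (beta * t) *: dw k t| <= alpha * Linf_max n du beta t + b s]]
  else +oo%E.

Definition IO_gain (U X Y : normedModType R) beta n m (S : relation U X Y) :=
  gain (fun s => s.2) beta n m S.
Definition IS_gain (U X Y : normedModType R) beta n m (S : relation U X Y) :=
  gain (fun s => s.1.2) beta n m S.

End Defs.

(* Main.v *)
Require Import Defs.
From HB Require Import structures.
From mathcomp Require Import all_boot all_order all_algebra.
From mathcomp Require Import all_classical all_reals all_analysis.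
Import Order.TTheory GRing.Theory Num.Theory.
Import numFieldNormedType.Exports.
Local Open Scope classical_set_scope.
Local Open Scope ring_scope.
From mathcomp Require Import ring lra.

Section Gen.
Variables (R : realType) (X : completeNormedModType R).

Lemma series_dom (u : X ^nat) (c : R ^nat) : (forall k, `|u k| <= c k) ->
  cvgn (series c) -> cvgn (series u) /\ `|limn (series u)| <= limn (series c).
Proof.
move=> hc cc.
have cn : cvgn [normed series u].
  apply: (series_le_cvg _ _ hc cc) => k //; exact: le_trans (hc k).
split; first exact: normed_cvg.
apply: le_trans (lim_series_norm cn) _; apply: lim_series_le => //.
Qed.

Lemma expR_series (r : R) : series (exp_coeff r) @ \oo --> expR r.
Proof. exact: is_cvg_series_exp_coeff. Qed.

End Gen.
Arguments series_dom {R X u c}.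

Section Dk.
Variable R : realType.

Definition Dk (t e : R) (k : nat) := (t + e) ^+ k - t ^+ k - k%:R * e * t ^+ k.-1.

Lemma Dk_rec t e k : Dk t e k.+2 = (t + e) * Dk t e k.+1 + k.+1%:R * e ^+ 2 * t ^+ k.
Proof. rewrite /Dk /= !exprS; ring. Qed.

Lemma nat_le_2exp k : (k%:R : R) <= 2 ^+ k.
Proof.
have h : (k <= 2 ^ k)%N by apply: ltnW; apply: ltn_expl.
by rewrite -(natrX R 2 k) ler_nat.
Qed.

Lemma Dk_bound t e k : `|e| <= 1 -> `|Dk t e k| <= e ^+ 2 * (2 * (`|t| + 1)) ^+ k.
Proof.
move=> he; set P := `|t| + 1.
have P1 : 1 <= P by rewrite /P lerDr.
have P0 : 0 <= P by apply: le_trans P1.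
elim: k => [|k IH].
  have -> : Dk t e 0 = 0 by rewrite /Dk /=; ring.
  by rewrite normr0 mulr_ge0 // ?sqr_ge0 // exprn_ge0 // mulr_ge0.
case: k IH => [|k] IH.
  have -> : Dk t e 1 = 0 by rewrite /Dk /=; ring.
  by rewrite normr0 mulr_ge0 // ?sqr_ge0 // exprn_ge0 // mulr_ge0.
rewrite Dk_rec.
have Hte : `|t + e| <= P by rewrite /P; apply: le_trans (ler_normD _ _) _; rewrite lerD2l.
have Htk : `|t| ^+ k <= P ^+ k by apply: lerXn2r; rewrite ?nnegrE //= /P lerDl.
have H4 : (k.+1%:R : R) <= 2 ^+ k.+1 := nat_le_2exp k.+1.
have H5 : P ^+ k <= P ^+ k.+2.
  rewrite !exprS mulrA; apply: ler_peMl; rewrite ?exprn_ge0 //.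
  by rewrite -expr2 -(expr1n R 2); apply: lerXn2r; rewrite ?nnegrE.
apply: le_trans (ler_normD _ _) _.
rewrite !normrM normrX normr_nat -[`|e| * `|e|]expr2 real_normK ?num_real //.
have step1 : `|t + e| * `|Dk t e k.+1| <= P * (e ^+ 2 * (2 * P) ^+ k.+1).
  by apply: ler_pM.
have step2 : k.+1%:R * e ^+ 2 * `|t| ^+ k <= e ^+ 2 * (2 ^+ k.+1 * P ^+ k.+2).
  rewrite [_ * e ^+ 2]mulrC -mulrA; apply: ler_wpM2l; first exact: sqr_ge0.
  apply: ler_pM => //; apply: le_trans Htk H5.
apply: le_trans (lerD step1 step2) _.
rewrite le_eqVlt; apply/orP; left; apply/eqP.
rewrite !exprS exprMn; ring.
Qed.

End Dk.
Arguments Dk {R}.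
Arguments Dk_bound {R}.
Arguments Dk_rec {R}.

Section Expo.
Set Implicit Arguments. Unset Strict Implicit.
Variables (R : realType) (X : completeNormedModType R) (A : {linear X -> X}) (L : R).
Hypothesis L0 : 0 <= L.
Hypothesis hL : forall z, `|A z| <= L * `|z|.

Definition eterm (t : R) (z : X) (k : nat) : X := (t ^+ k / k`!%:R) *: iter k A z.

Lemma iter_bound k z : `|iter k A z| <= L ^+ k * `|z|.
Proof.
elim: k => [|k IH]/=; first by rewrite expr0 mul1r.
rewrite exprS -mulrA; apply: le_trans (hL _) _; exact: ler_wpM2l.
Qed.

Lemma eterm_bound t z k : `|eterm t z k| <= `|z| * exp_coeff (`|t| * L) k.
Proof.
rewrite /eterm normrZ /exp_coeff /=.
apply: le_trans (ler_wpM2l (normr_ge0 _) (iter_bound k z)) _.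
rewrite normrM normfV normrX (@ger0_norm _ k`!%:R) // exprMn.
by rewrite le_eqVlt; apply/orP; left; apply/eqP; ring.
Qed.

Lemma E_cvg_bound t z : series (eterm t z) @ \oo --> expop A t z /\
  `|expop A t z| <= `|z| * expR (`|t| * L).
Proof.
have hc : series (fun k => `|z| * exp_coeff (`|t| * L) k) @ \oo --> `|z| * expR (`|t| * L).
  have -> : (fun k => `|z| * exp_coeff (`|t| * L) k) = `|z| *: exp_coeff (`|t| * L).
    by apply/funext => k.
  by rewrite seriesZ; apply: cvgZr; exact: is_cvg_series_exp_coeff.
have [h1 h2] := series_dom (eterm_bound t z) (cvgP _ hc).
split; first exact: h1.
by move: h2; rewrite (cvg_lim _ hc).
Qed.

Lemma E_cvg t z : series (eterm t z) @ \oo --> expop A t z.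
Proof. by case: (E_cvg_bound t z). Qed.

Lemma E_bound t z : `|expop A t z| <= expR (`|t| * L) * `|z|.
Proof. by case: (E_cvg_bound t z) => _; rewrite mulrC. Qed.

Lemma E_eq t z l : series (eterm t z) @ \oo --> l -> expop A t z = l.
Proof. exact: cvg_lim. Qed.

Lemma iterD k p q : iter k A (p + q) = iter k A p + iter k A q.
Proof. by elim: k => [|k IH] //=; rewrite IH linearD. Qed.

Lemma iterZ k c p : iter k A (c *: p) = c *: iter k A p.
Proof. by elim: k => [|k IH] //=; rewrite IH linearZ. Qed.

Lemma E_add t p q : expop A t (p + q) = expop A t p + expop A t q.
Proof.
apply: E_eq.
have -> : eterm t (p + q) = eterm t p + eterm t q.
  by apply/funext => k; rewrite /eterm /= iterD scalerDr.
by rewrite seriesD; apply: cvgD; apply: E_cvg.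
Qed.

Lemma seriesZ' (f : X ^nat) (c : R) :
  series (fun k => c *: f k) = (fun n => c *: series f n).
Proof. by apply/funext => n; rewrite /series /= scaler_sumr. Qed.

Lemma E_scale t c p : expop A t (c *: p) = c *: expop A t p.
Proof.
apply: E_eq.
have -> : eterm t (c *: p) = (fun k => c *: eterm t p k).
  by apply/funext => k; rewrite /eterm /= iterZ !scalerA mulrC.
by rewrite seriesZ'; apply: cvgZr; apply: E_cvg.
Qed.

Lemma E_opp t p : expop A t (- p) = - expop A t p.
Proof. by rewrite -scaleN1r E_scale scaleN1r. Qed.

Lemma E_sub t p q : expop A t (p - q) = expop A t p - expop A t q.
Proof. by rewrite E_add E_opp. Qed.

Lemma E0 z : expop A 0 z = z.
Proof.
apply: E_eq; rewrite -cvg_shiftS.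
have -> : [sequence series (eterm 0 z) n.+1]_n = cst z.
  apply/funext => n /=; rewrite /series /=.
  rewrite big_nat_recl //= big1 ?addr0; first by rewrite /eterm /= expr0 mul1r invr1 scale1r.
  by move=> i _; rewrite /eterm expr0n /= mul0r scale0r.
exact: cvg_cst.
Qed.

Definition dterm (t : R) (z : X) (k : nat) : X :=
  (k%:R * t ^+ k.-1 / k`!%:R) *: iter k A z.

Lemma dterm_cvg t z : series (dterm t z) @ \oo --> expop A t (A z).
Proof.
rewrite -cvg_shiftS.
have -> : [sequence series (dterm t z) n.+1]_n = series (eterm t (A z)).
  apply/funext => n /=; rewrite /series /= big_nat_recl //.
  rewrite {1}/dterm mul0r mul0r scale0r add0r.
  apply: eq_bigr => i _; rewrite /dterm /eterm /= -iterSr factS natrM.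
  congr (_ *: _).
  have h1 : (i.+1%:R : R) != 0 by rewrite pnatr_eq0.
  have h2 : (i`!%:R : R) != 0 by rewrite pnatr_eq0 -lt0n fact_gt0.
  by rewrite -mulf_div divff // mul1r.
exact: E_cvg.
Qed.

Lemma E_deriv t e z : `|e| <= 1 ->
  `|expop A (t + e) z - expop A t z - e *: expop A t (A z)|
    <= e ^+ 2 * `|z| * expR (2 * (`|t| + 1) * L).
Proof.
move=> he.
pose r k := (Dk t e k / k`!%:R) *: iter k A z.
have hr : series r = (fun n => series (eterm (t + e) z) n - series (eterm t z) n
                                - e *: series (dterm t z) n).
  apply/funext => n; rewrite /series /= scaler_sumr -!sumrB.
  apply: eq_bigr => k _.
  have hc : Dk t e k / k`!%:R = (t + e) ^+ k / k`!%:R - t ^+ k / k`!%:R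
                                 - e * (k%:R * t ^+ k.-1 / k`!%:R) by rewrite /Dk; ring.
  by rewrite /r /eterm /dterm hc !scalerBl scalerA.
have hcv : series r @ \oo --> expop A (t + e) z - expop A t z - e *: expop A t (A z).
  rewrite hr; apply: cvgB; first by apply: cvgB; apply: E_cvg.
  by apply: cvgZr; apply: dterm_cvg.
have hb : forall k, `|r k| <= (e ^+ 2 * `|z|) * exp_coeff (2 * (`|t| + 1) * L) k.
  move=> k; rewrite /r normrZ /exp_coeff /=.
  apply: le_trans (ler_wpM2l (normr_ge0 _) (iter_bound k z)) _.
  rewrite normrM normfV (@ger0_norm _ k`!%:R) //.
  have hD := Dk_bound t e k he.
  have hk : 0 < (k`!%:R : R) by rewrite ltr0n fact_gt0.
  rewrite exprMn.
  apply: le_trans (_ : (e ^+ 2 * (2 * (`|t| + 1)) ^+ k) / k`!%:R * (L ^+ k * `|z|) <= _).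
    apply: ler_wpM2r; first by rewrite mulr_ge0 ?exprn_ge0.
    by apply: ler_wpM2r => //; rewrite invr_ge0 ltW.
  rewrite le_eqVlt; apply/orP; left; apply/eqP; ring.
have hc : series (fun k => (e ^+ 2 * `|z|) * exp_coeff (2 * (`|t| + 1) * L) k) @ \oo
           --> (e ^+ 2 * `|z|) * expR (2 * (`|t| + 1) * L).
  have -> : (fun k => (e ^+ 2 * `|z|) * exp_coeff (2 * (`|t| + 1) * L) k)
            = (e ^+ 2 * `|z|) *: exp_coeff (2 * (`|t| + 1) * L) by apply/funext.
  by rewrite seriesZ; apply: cvgZr; exact: is_cvg_series_exp_coeff.
have [_ h2] := series_dom hb (cvgP _ hc).
move: h2; rewrite (cvg_lim _ hcv) // => h2; apply: (le_trans h2); rewrite le_eqVlt; apply/orP; left; apply/eqP; exact: (cvg_lim _ hc).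
Qed.

End Expo.
Unset Implicit Arguments. Set Strict Implicit.

Section Op.
Variable R : realType.
Implicit Types (V W : normedModType R).

Lemma opnormP {V W : normedModType R} (f : V -> W) (M : R) : 0 <= M ->
  (forall x, `|f x| <= M * `|x|) ->
  0 <= opnorm f /\ forall x, `|f x| <= opnorm f * `|x|.
Proof.
move=> M0 hM.
have ne : [set M : R | 0 <= M /\ forall x, `|f x| <= M * `|x|] !=set0 by exists M.
split; first by apply: lb_le_inf => // y [].
move=> x; have [x0|x0] := eqVneq `|x| 0.
  by move: (hM x); rewrite x0 !mulr0.
have xp : 0 < `|x| by rewrite lt_neqAle eq_sym x0 normr_ge0.
rewrite -ler_pdivrMr //; apply: lb_le_inf => // y [_ hy].
by rewrite ler_pdivrMr.
Qed.

Lemma opnorm_use {V W : normedModType R} (f : V -> W) (M c : R) : 0 <= M ->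
  (forall x, `|f x| <= M * `|x|) -> opnorm f <= c -> forall x, `|f x| <= c * `|x|.
Proof.
move=> M0 hM hc x; have [_ h] := opnormP f M M0 hM.
by apply: le_trans (h x) _; apply: ler_wpM2r.
Qed.

Lemma lin_bound {V W : normedModType R} (f : {linear V -> W}) : continuous f ->
  exists M, 0 <= M /\ forall x, `|f x| <= M * `|x|.
Proof.
move=> cf; have := (linear_bounded_continuous f).2 cf.
move/linear_boundedP => [M [Mreal HM]].
exists (`|M| + 1); split; first by rewrite addr_ge0.
apply: HM; rewrite (le_lt_trans (real_ler_norm Mreal)) //.
by rewrite ltrDl.
Qed.

End Op.
Arguments opnormP {R V W}.
Arguments opnorm_use {R V W}.
Arguments lin_bound {R V W}.

Section MVI.
Variable R : realType.
Variable X : normedModType R.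

Lemma mvi (w v : R -> X) (phi : R -> R) (T : R) : 0 <= T ->
  (forall s, 0 <= s -> s <= T -> forall eps, 0 < eps -> exists2 d, 0 < d &
     forall h, h != 0 -> `|h| < d -> 0 <= s + h ->
       `|w (s + h) - w s - h *: v s| <= eps * `|h|) ->
  (forall s h, 0 <= s -> s <= T -> 0 < h -> `|v s| * h <= phi (s + h) - phi s) ->
  `|w T - w 0| <= phi T - phi 0.
Proof.
move=> T0 KE HP.
pose g s := `|w s - w 0| - (phi s - phi 0).
have g0 : g 0 = 0 by rewrite /g !subrr normr0 subrr.
have mono : forall r c, 0 <= r -> r <= c -> c <= T -> phi r <= phi c.
  move=> r c r0 rc cT; have [->|rc'] := eqVneq r c; first by [].
  have hp : 0 < c - r by rewrite subr_gt0 lt_neqAle rc' rc.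
  have := HP r (c - r) r0 (le_trans rc cT) hp.
  have -> : r + (c - r) = c by rewrite addrC subrK.
  move=> H; rewrite -subr_ge0; apply: (le_trans _ H); by rewrite mulr_ge0 // ltW.
have step : forall c eps, 0 <= c -> c <= T -> 0 < eps -> exists2 d, 0 < d &
    forall h, 0 < h -> h < d -> g (c + h) <= g c + eps * h.
  move=> c eps c0 cT e0; have [d d0 Hd] := KE c c0 cT eps e0.
  exists d => // h h0 hd.
  have hh : `|h| < d by rewrite gtr0_norm.
  have H := Hd h (lt0r_neq0 h0) hh (addr_ge0 c0 (ltW h0)).
  rewrite gtr0_norm // in H.
  have H2 := HP c h c0 cT h0.
  have H3 : `|w (c + h) - w 0| <= `|w c - w 0| + `|w (c + h) - w c|.
    have -> : w (c + h) - w 0 = (w (c + h) - w c) + (w c - w 0) by rewrite addrA subrK.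
    by rewrite addrC ler_normD.
  have H4 : `|w (c + h) - w c| <= `|v c| * h + eps * h.
    have -> : w (c + h) - w c = (w (c + h) - w c - h *: v c) + h *: v c by rewrite subrK.
    apply: le_trans (ler_normD _ _) _; rewrite normrZ gtr0_norm // [h * _]mulrC.
    by rewrite addrC lerD2l.
  rewrite /g; lra.
suff H : forall eps, 0 < eps -> g T <= eps * T + eps.
  have : g T <= 0.
    apply/ler_addgt0Pr => e e0; rewrite add0r.
    have T1 : 0 < T + 1 by rewrite ltr_wpDl.
    have := H (e / (T + 1)) (divr_gt0 e0 T1).
    by rewrite -{2}(mulr1 (e / (T + 1))) -mulrDr mulrAC -mulrA divff ?mulr1 // gt_eqF.
  rewrite /g; lra.
move=> eps e0.
pose S := fun s => 0 <= s /\ s <= T /\ forall r, 0 <= r -> r <= s -> g r <= eps * r.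
have S0 : S 0.
  split => //; split => // r r0 r0'.
  have -> : r = 0 by apply/eqP; rewrite eq_le r0 r0'.
  by rewrite g0 mulr0.
have Sne : S !=set0 by exists 0.
have hub : ubound S T by move=> y [_ []].
have hs : has_sup S by split => //; exists T.
set c := sup S.
have c0 : 0 <= c by apply: sup_upper_bound.
have cT : c <= T by apply: ge_sup.
have below : forall r, 0 <= r -> r < c -> g r <= eps * r.
  move=> r r0 rc; have [y [y0 [yT Hy]] ry] := sup_gt Sne rc.
  by apply: Hy => //; apply: ltW.
have gc : g c <= eps * c.
  have [c00|cpos] := eqVneq c 0; first by rewrite c00 g0 mulr0.
  have cp : 0 < c by rewrite lt_neqAle eq_sym cpos c0.
  apply/ler_addgt0Pr => eta eta0.
  have [d d0 Hd] := KE c c0 cT 1 ltr01.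
  have v1 : 0 < `|v c| + 1 by rewrite ltr_wpDl.
  pose m := Num.min (d / 2) (Num.min c (eta / (`|v c| + 1))).
  have m0 : 0 < m by rewrite /m !lt_min divr_gt0 // cp divr_gt0.
  have md : m < d.
    by rewrite /m gt_min; apply/orP; left; rewrite ltr_pdivrMr // ltr_pMr // ltr1n.
  have mc : m <= c by rewrite /m !ge_min lexx !orbT.
  have me : m <= eta / (`|v c| + 1) by rewrite /m !ge_min lexx !orbT.
  have m1 : - m != 0 by rewrite oppr_eq0 gt_eqF.
  have m2 : `|- m| < d by rewrite normrN gtr0_norm.
  have m3 : 0 <= c + - m by rewrite subr_ge0.
  have H := Hd (- m) m1 m2 m3.
  rewrite normrN gtr0_norm // mul1r in H.
  have r0 : 0 <= c - m by rewrite subr_ge0.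
  have r1 : c - m < c by rewrite ltrBlDr ltrDl.
  have gr := below (c - m) r0 r1.
  have ph := mono (c - m) c r0 (ltW r1) cT.
  have H3 : `|w c - w 0| <= `|w (c - m) - w 0| + `|w c - w (c - m)|.
    have -> : w c - w 0 = (w c - w (c - m)) + (w (c - m) - w 0) by rewrite addrA subrK.
    by rewrite addrC ler_normD.
  have H4 : `|w c - w (c - m)| <= m * (`|v c| + 1).
    have -> : w c - w (c - m) = - (w (c - m) - w c - (- m) *: v c) + m *: v c.
      by rewrite scaleNr opprK opprD subrK opprB.
    apply: le_trans (ler_normD _ _) _; rewrite normrN normrZ gtr0_norm //.
    by rewrite mulrDr mulr1 addrC lerD2l.
  have H5 : m * (`|v c| + 1) <= eta by rewrite -ler_pdivlMr.
  rewrite /g in gr *.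
  have : eps * (c - m) <= eps * c by rewrite ler_wpM2l ?ltW // lerBlDr lerDl ltW.
  lra.
have Sc : S c.
  split => //; split => // r r0 rc.
  have [rc'|rc'] := eqVneq r c; first by rewrite rc'.
  by apply: below => //; rewrite lt_neqAle rc' rc.
have cTe : c = T.
  apply/eqP; rewrite eq_le cT /=; rewrite leNgt; apply/negP => cT'.
  have [d d0 Hd] := step c eps c0 cT e0.
  pose h := Num.min (d / 2) (T - c).
  have h0 : 0 < h by rewrite /h lt_min divr_gt0 // subr_gt0 cT'.
  have hd : h < d by rewrite /h gt_min; apply/orP; left; rewrite ltr_pdivrMr // ltr_pMr // ltr1n.
  have hT : h <= T - c by rewrite /h ge_min lexx orbT.
  have Sch : S (c + h).
    split; first by rewrite addr_ge0 // ltW.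
    split; first by rewrite -lerBrDl.
    move=> r r0 rch; have [rc|rc] := leP r c; first by case: Sc => _ [_]; apply.
    have q1 : 0 < r - c by rewrite subr_gt0.
    have q2 : r - c < d by rewrite ltrBlDl (le_lt_trans rch) // ltrD2l.
    have := Hd (r - c) q1 q2.
    have -> : c + (r - c) = r by rewrite addrC subrK.
    move=> H.
    have : eps * c + eps * (r - c) = eps * r by rewrite -mulrDr addrC subrK.
    lra.
  have := sup_upper_bound hs Sch; rewrite -/c => H.
  lra.
by rewrite -cTe; apply: le_trans gc _; rewrite lerDl ltW.
Qed.

End MVI.

Section ED.
Set Implicit Arguments. Unset Strict Implicit.
Variable R : realType.
Variable V : normedModType R.

Definition ED (f : R -> V) (t : R) (d : V) :=
  forall eps, 0 < eps -> exists2 del, 0 < del &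
    forall h, h != 0 -> `|h| < del -> 0 <= t + h -> `|f (t + h) - f t - h *: d| <= eps * `|h|.

Lemma hd_ED f t d : has_deriv_nonneg f t d -> ED f t d.
Proof.
move=> /cvgrPdist_lt H eps e0.
have := H eps e0; rewrite /within /= => /nbhs_ballP [del del0 Hd].
exists del => // h h0 hd th.
have hb : ball 0 del h by rewrite /ball /= sub0r normrN.
have := Hd h hb (conj h0 th).
have hp : 0 < `|h| by rewrite normr_gt0.
have -> : f (t + h) - f t - h *: d = h *: (h^-1 *: (f (t + h) - f t) - d).
  by rewrite scalerBr scalerA divff // scale1r.
rewrite normrZ distrC => /ltW H2.
rewrite [eps * _]mulrC; apply: ler_wpM2l => //; exact: ltW.
Qed.

Lemma ED_hd f t d : ED f t d -> has_deriv_nonneg f t d.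
Proof.
move=> H; apply/cvgrPdist_lt => eps e0.
have [del del0 Hd] := H (eps / 2) (divr_gt0 e0 (ltr0Sn _ 1)).
rewrite /within /=; apply/nbhs_ballP; exists del => // h hb [h0 th].
have hd : `|h| < del by move: hb; rewrite /ball /= sub0r normrN.
have := Hd h h0 hd th.
have hp : 0 < `|h| by rewrite normr_gt0.
have -> : f (t + h) - f t - h *: d = h *: (h^-1 *: (f (t + h) - f t) - d).
  by rewrite scalerBr scalerA divff // scale1r.
rewrite normrZ distrC mulrC ler_pM2r // => H2.
by apply: le_lt_trans H2 _; rewrite ltr_pdivrMr // ltr_pMr // ltr1n.
Qed.

Lemma ED_unique f t d1 d2 : 0 <= t -> ED f t d1 -> ED f t d2 -> d1 = d2.
Proof.
move=> t0 H1 H2; apply/eqP; rewrite -subr_eq0 -normr_le0.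
apply/ler_addgt0Pr => e e0; rewrite add0r.
have [del1 p1 K1] := H1 (e / 2) (divr_gt0 e0 (ltr0Sn _ 1)).
have [del2 p2 K2] := H2 (e / 2) (divr_gt0 e0 (ltr0Sn _ 1)).
pose h := Num.min del1 del2 / 2.
have h0 : 0 < h by rewrite /h divr_gt0 // lt_min p1 p2.
have hm : h < Num.min del1 del2 by rewrite /h ltr_pdivrMr ?ltr_pMr ?ltr1n // lt_min p1 p2.
have hn : `|h| = h by rewrite gtr0_norm.
have hd1 : `|h| < del1 by rewrite hn; apply: lt_le_trans hm _; rewrite ge_min lexx.
have hd2 : `|h| < del2 by rewrite hn; apply: lt_le_trans hm _; rewrite ge_min lexx orbT.
have th : 0 <= t + h by rewrite addr_ge0 // ltW.
have A1 := K1 h (lt0r_neq0 h0) hd1 th.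
have A2 := K2 h (lt0r_neq0 h0) hd2 th.
have : `|h *: (d1 - d2)| <= e * `|h|.
  have -> : h *: (d1 - d2) = (f (t + h) - f t - h *: d2) - (f (t + h) - f t - h *: d1).
    by rewrite scalerBr opprB [RHS]addrC addrA subrK.
  apply: le_trans (ler_normB _ _) _.
  have -> : e * `|h| = e / 2 * `|h| + e / 2 * `|h| by rewrite -mulrDl -splitr.
  by rewrite addrC lerD.
by rewrite normrZ mulrC hn ler_pM2r.
Qed.

End ED.
Unset Implicit Arguments. Set Strict Implicit.

Lemma ident (R : realType) (X : normedModType R) (a b c d e f : X) (h : R) :
  (a + h *: b + c) - d - h *: (e - f) = (a - d - (- h) *: f) + h *: (b - e) + c.
Proof.
rewrite scaleNr opprK !scalerBr !opprD !opprK.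
rewrite -!addrA; congr (_ + _).
rewrite [RHS]addrC !addrA [RHS]addrC !addrA.
by rewrite [LHS](ACl (3*5*1*4*2)).
Qed.

Section KE.
Variables (R : realType) (X : completeNormedModType R) (U : normedModType R).
Variables (A : {linear X -> X}) (L : R) (L0 : 0 <= L) (hL : forall z, `|A z| <= L * `|z|).
Variable (B : {linear U -> X}).

Local Notation E := (expop A).

Lemma KE (x dx : R -> X) (u : R -> U) T s : 0 <= s -> ED x s (dx s) ->
  dx s = A (x s) + B (u s) ->
  ED (fun r => E (T - r) (x r)) s (E (T - s) (B (u s))).
Proof.
move=> s0 Hx hdx eps e0.
set tau := T - s.
set C1 := expR (2 * (`|tau| + 1) * L).
set C2 := expR ((`|tau| + 1) * L).
set M := `|x s| * C1 + `|E tau (A (dx s))| + `|dx s| * C1.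
have C1p : 0 < C1 by rewrite expR_gt0.
have C2p : 0 < C2 by rewrite expR_gt0.
have M0 : 0 <= M by rewrite /M !addr_ge0 // mulr_ge0 // ltW.
have [d0 d0p Hq] := Hx (eps / (2 * C2)) (divr_gt0 e0 (mulr_gt0 (ltr0Sn _ 1) C2p)).
pose del := Num.min 1 (Num.min d0 (eps / (2 * (M + 1)))).
have M1 : 0 < M + 1 by rewrite ltr_wpDl.
have delp : 0 < del by rewrite /del !lt_min ltr01 d0p divr_gt0 // mulr_gt0.
exists del => // h h0 hdel sh.
have hn1 : `|h| <= 1 by apply/ltW/(lt_le_trans hdel); rewrite /del ge_min lexx.
have hnd0 : `|h| < d0 by apply/(lt_le_trans hdel); rewrite /del !ge_min lexx !orbT.
have hnM : `|h| <= eps / (2 * (M + 1)).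
  by apply/ltW/(lt_le_trans hdel); rewrite /del !ge_min lexx !orbT.
have hq0 := Hq h h0 hnd0 sh.
pose q := x (s + h) - (x s + h *: dx s).
have hq : `|q| <= eps / (2 * C2) * `|h| by rewrite /q opprD addrA.
have xsh : x (s + h) = x s + h *: dx s + q by rewrite /q [RHS]addrC subrK.
clearbody q.
have Tsh : T - (s + h) = tau + - h by rewrite /tau opprD addrA.
have hv : E tau (B (u s)) = E tau (dx s) - E tau (A (x s)).
  by rewrite hdx (E_add L0 hL) addrC addKr.
rewrite /= Tsh xsh !(E_add L0 hL) (E_scale L0 hL) -/tau hv ident.
have hN : `|- h| <= 1 by rewrite normrN.
have P1 := E_deriv L0 hL tau (x s) hN.
have P2 := E_deriv L0 hL tau (dx s) hN.
have P3 := E_bound L0 hL (tau + - h) q.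
rewrite -/C1 in P1 P2.
have eb : expR (`|tau + - h| * L) <= C2.
  rewrite ler_expR ler_wpM2r //; apply: le_trans (ler_normD _ _) _.
  by rewrite lerD2l normrN.
set a1 := E (tau + - h) (x s) - E tau (x s) - - h *: E tau (A (x s)) in P1 *.
set b1 := E (tau + - h) (dx s) - E tau (dx s).
have P2' : `|b1| <= `|h| * `|E tau (A (dx s))| + h ^+ 2 * `|dx s| * C1.
  have -> : b1 = (b1 - - h *: E tau (A (dx s))) + - h *: E tau (A (dx s)) by rewrite subrK.
  apply: le_trans (ler_normD _ _) _; rewrite normrZ normrN addrC lerD2l.
  by move: P2; rewrite sqrrN.
set c1 := E (tau + - h) q in P3 *.
have P3' : `|c1| <= eps / 2 * `|h|.
  apply: le_trans P3 _; apply: le_trans (ler_wpM2r (normr_ge0 _) eb) _.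
  apply: le_trans (ler_wpM2l (ltW C2p) hq) _.
  rewrite mulrA; apply: ler_wpM2r => //; rewrite le_eqVlt; apply/orP; left; apply/eqP.
  by field; rewrite gt_eqF.
apply: le_trans (ler_normD _ _) _; apply: le_trans (lerD (ler_normD _ _) (lexx _)) _.
rewrite normrZ.
have hh : h ^+ 2 = `|h| * `|h| by rewrite -normrM -expr2 ger0_norm // sqr_ge0.
move: P1 P2' P3'; rewrite sqrrN hh => P1 P2' P3'.
set n := `|h| in P1 P2' P3' hn1 hnM *.
have n0 : 0 <= n by rewrite normr_ge0.
have HM : n * (M + 1) <= eps / 2.
  rewrite -ler_pdivlMr //; apply: le_trans hnM _; rewrite le_eqVlt; apply/orP; left; apply/eqP.
  by field; rewrite gt_eqF.
set e1 := `|E tau (A (dx s))| in P2' *.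
set x1 := `|x s| in P1 *.
set y1 := `|dx s| in P2' *.
have nn : n * n <= n by rewrite -[X in _ <= X]mulr1 ler_wpM2l.
have e10 : 0 <= e1 by rewrite normr_ge0.
have x10 : 0 <= x1 by rewrite normr_ge0.
have y10 : 0 <= y1 by rewrite normr_ge0.
have S2 : n * `|b1| <= n * (n * e1 + n * y1 * C1).
  apply: ler_wpM2l => //; apply: le_trans P2' _; rewrite lerD2l.
  by apply: ler_wpM2r; [exact: ltW | apply: ler_wpM2r].
have S3 : n * (n * e1 + n * y1 * C1) <= n * (M * n).
  apply: ler_wpM2l => //; rewrite /M -/e1 -/x1 -/y1.
  have : n * e1 + n * y1 * C1 <= n * e1 + n * (y1 * C1) + n * (x1 * C1).
    rewrite -mulrA lerDl mulr_ge0 // mulr_ge0 // ltW //.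
  move=> H; apply: le_trans H _; rewrite le_eqVlt; apply/orP; left; apply/eqP; ring.
have S4 : n * (M * n) <= n * (eps / 2).
  by apply: ler_wpM2l => //; rewrite mulrC; apply: le_trans HM; rewrite ler_wpM2l // lerDl.
have S1 : `|a1| <= n * (n * x1 * C1).
  apply: le_trans P1 _; rewrite le_eqVlt; apply/orP; left; apply/eqP; ring.
have S5 : n * (n * x1 * C1) + n * `|b1| <= n * (M * n).
  have : n * (n * x1 * C1) + n * (n * e1 + n * y1 * C1) = n * (M * n) by rewrite /M -/e1 -/x1 -/y1; ring.
  move=> <-; rewrite lerD2l; exact: S2.
have : `|a1| + n * `|b1| + `|c1| <= n * (eps / 2) + eps / 2 * n.
  apply: lerD => //; apply: le_trans (lerD S1 (lexx _)) _; apply: le_trans S5 S4.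
move=> H; apply: le_trans H _; rewrite le_eqVlt; apply/orP; left; apply/eqP.
by field.
Qed.
End KE.

Section Core.
Variables (R : realType) (X : completeNormedModType R) (U : normedModType R).
Variables (A : {linear X -> X}) (L : R) (L0 : 0 <= L) (hL : forall z, `|A z| <= L * `|z|).
Variable (B : {linear U -> X}).
Variables (nB a alpha beta : R).
Hypothesis nB0 : 0 <= nB.
Hypothesis hB : forall v, `|B v| <= nB * `|v|.
Hypothesis a0 : 0 <= a.
Hypothesis hba : beta < alpha.
Hypothesis Hexp : forall tau, 0 <= tau -> forall z, `|expop A tau z| <= a * expR (- (alpha * tau)) * `|z|.

Local Notation E := (expop A).

Lemma core_bound (x dx : R -> X) (u : R -> U) (T K : R) : 0 <= T ->
  (forall t, 0 <= t -> ED x t (dx t)) ->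
  (forall t, 0 <= t -> dx t = A (x t) + B (u t)) ->
  (forall s, 0 <= s -> s <= T -> expR (beta * s) * `|u s| <= K) ->
  expR (beta * T) * `|x T| <= a * `|x 0| + a * nB * K / (alpha - beta).
Proof.
move=> T0 Hd Hdx HK.
set g := alpha - beta.
have g0 : 0 < g by rewrite subr_gt0.
have K0 : 0 <= K.
  by apply: le_trans (HK 0 (lexx _) T0); rewrite mulr_ge0 // expR_ge0.
set c := a * nB * K / g.
have c0 : 0 <= c by apply: divr_ge0; [apply: mulr_ge0; [exact: mulr_ge0 | exact: K0] | exact: ltW].
pose phi s := c * expR (g * s - alpha * T).
pose w r := E (T - r) (x r).
pose v r := E (T - r) (B (u r)).
have Hm : `|w T - w 0| <= phi T - phi 0.
  apply: (@mvi R X w v phi T T0).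
    move=> s s0 sT; exact: (@KE _ _ _ A L L0 hL B x dx u T s s0 (Hd s s0) (Hdx s s0)).
  move=> s h s0 sT h0.
  have Ts : 0 <= T - s by rewrite subr_ge0.
  have V1 : `|v s| <= a * expR (- (alpha * (T - s))) * (nB * `|u s|).
    rewrite /v /=. apply: (le_trans (Hexp _ Ts (B (u s)))). apply: ler_wpM2l; first by rewrite mulr_ge0 // expR_ge0.
    exact: hB.
  have U1 : `|u s| <= K * expR (- (beta * s)).
    rewrite expRN ler_pdivlMr ?expR_gt0 // mulrC; exact: HK.
  have V2 : `|v s| <= c * g * expR (g * s - alpha * T).
    apply: le_trans V1 _.
    have -> : c * g * expR (g * s - alpha * T) = a * expR (- (alpha * (T - s))) * (nB * (K * expR (- (beta * s)))).
      have -> : g * s - alpha * T = - (alpha * (T - s)) + - (beta * s) by rewrite /g; ring.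
      rewrite expRD /c; field; rewrite gt_eqF //.
    apply: ler_wpM2l; first by rewrite mulr_ge0 // expR_ge0.
    by apply: ler_wpM2l.
  have P1 : c * g * expR (g * s - alpha * T) * h <= phi (s + h) - phi s.
    rewrite /phi.
    have -> : g * (s + h) - alpha * T = (g * s - alpha * T) + g * h by ring.
    rewrite [expR (_ + g * h)]expRD.
    have := expR_ge1Dx (g * h) => Hx.
    set q := expR (g * s - alpha * T).
    have q0 : 0 <= q by rewrite expR_ge0.
    have : c * q * (1 + g * h) <= c * q * expR (g * h) by apply: ler_wpM2l => //; rewrite mulr_ge0.
    move=> H; apply: le_trans (_ : c * q * (1 + g * h) - c * q <= _); last first.
      by rewrite lerD2r mulrA.
    rewrite le_eqVlt; apply/orP; left; apply/eqP; ring.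
  apply: le_trans P1; apply: ler_wpM2r => //; exact: ltW.
have wT : w T = x T by rewrite /w subrr E0.
have w0 : w 0 = E T (x 0) by rewrite /w subr0.
have H0 := Hexp T T0 (x 0).
have HxT : `|x T| <= a * expR (- (alpha * T)) * `|x 0| + (phi T - phi 0).
  have -> : x T = E T (x 0) + (w T - w 0) by rewrite wT w0 addrC subrK.
  by apply: le_trans (ler_normD _ _) _; apply: lerD.
set p := expR (beta * T).
set q := expR (- (alpha * T)).
have p0 : 0 < p by rewrite expR_gt0.
have q0 : 0 < q by rewrite expR_gt0.
have pq1 : p * q <= 1.
  rewrite /p /q -expRD expR_le1.
  have -> : beta * T + - (alpha * T) = - (g * T) by rewrite /g; ring.
  by rewrite oppr_le0 mulr_ge0 // ltW.
have e1 : phi T = c / p.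
  rewrite /phi /p; have -> : g * T - alpha * T = - (beta * T) by rewrite /g; ring.
  by rewrite expRN.
have e2 : phi 0 = c * q by rewrite /phi mulr0 sub0r.
rewrite e1 e2 -/q in HxT.
have S1 : p * `|x T| <= p * (a * q * `|x 0| + (c / p - c * q)) by rewrite ler_wpM2l // ltW.
have S2 : p * (a * q * `|x 0| + (c / p - c * q)) = a * (p * q) * `|x 0| + c - c * (p * q).
  by field; rewrite gt_eqF.
have S3 : a * (p * q) * `|x 0| <= a * `|x 0|.
  rewrite -mulrA ler_wpM2l //; apply: ler_piMl => //.
have S4 : 0 <= c * (p * q) by rewrite mulr_ge0 // mulr_ge0 // ltW.
rewrite -/c; lra.
Qed.
End Core.

Section Aux.
Set Implicit Arguments. Unset Strict Implicit.
Variable R : realType.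

Lemma ED_ext (V : normedModType R) (f g : R -> V) t d : (forall r, 0 <= r -> f r = g r) -> 0 <= t ->
  ED f t d -> ED g t d.
Proof.
move=> fg t0 H eps e0; have [del d0 Hd] := H eps e0; exists del => // h h0 hd th.
by rewrite -!fg //; apply: Hd.
Qed.

Lemma ED_lin (V W : normedModType R) (C : {linear V -> W}) (MC : R) (x : R -> V) t d :
  0 <= MC -> (forall z, `|C z| <= MC * `|z|) -> ED x t d -> ED (fun r => C (x r)) t (C d).
Proof.
move=> MC0 hC H eps e0.
have M1 : 0 < MC + 1 by rewrite ltr_wpDl.
have [del d0 Hd] := H (eps / (MC + 1)) (divr_gt0 e0 M1); exists del => // h h0 hd th.
rewrite -linearZ -!linearB; apply: le_trans (hC _) _.
apply: le_trans (ler_wpM2l MC0 (Hd h h0 hd th)) _.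
rewrite mulrA; apply: ler_wpM2r => //.
by rewrite mulrA ler_pdivrMr // mulrDr mulr1 mulrC lerDl ltW.
Qed.

Lemma sup_facts (U : normedModType R) (f : R -> U) beta t : 0 <= t ->
  {within `[(0:R), +oo[, continuous f} ->
  forall s, 0 <= s -> s <= t ->
  expR (beta * s) * `|f s| <= sup [set `|expR (beta * r) *: f r| | r in `[(0:R), t]].
Proof.
move=> t0 cf s s0 st.
have cf' : {within `[(0:R), t], continuous f}.
  apply: continuous_subspaceW cf => r /=; rewrite !in_itv /= => /andP [r0 _].
  by rewrite r0.
have cn : {within `[(0:R), t], continuous (fun r => `|f r|)}.
  apply: (@within_continuous_comp _ _ _ `[(0:R), t] f (fun z => `|z|)); last exact: cf'.
  move=> y _; exact: norm_continuous.
have [c _ Hc] := EVT_max t0 cn.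
apply: sup_upper_bound; last first.
  exists s; first by rewrite /= in_itv /= s0 st.
  by rewrite normrZ ger0_norm // expR_ge0.
split; first by exists `|expR (beta * 0) *: f 0|, 0 => //; rewrite /= in_itv /= lexx t0.
exists (expR (`|beta| * t) * `|f c|) => _ [r /= rin <-].
rewrite normrZ ger0_norm ?expR_ge0 //; apply: ler_pM; rewrite ?expR_ge0 //.
  rewrite ler_expR; move: rin; rewrite in_itv /= => /andP [r0 rt].
  apply: le_trans (ler_norm _) _; rewrite normrM; apply: ler_wpM2l => //.
  by rewrite ger0_norm.
exact: Hc.
Qed.

Lemma Linf_ge (U : normedModType R) (du : nat -> R -> U) beta t :
  sup [set `|expR (beta * r) *: du 0%N r| | r in `[(0:R), t]] <= Linf_max 0 du beta t.
Proof. by rewrite /Linf_max big_ord_recl big_ord0 le_max lexx. Qed.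

Lemma Linf_ge0 (U : normedModType R) (du : nat -> R -> U) beta t :
  0 <= Linf_max 0 du beta t.
Proof. by rewrite /Linf_max big_ord_recl big_ord0 le_max lexx orbT. Qed.

End Aux.
Unset Implicit Arguments. Set Strict Implicit.

Lemma mono_prod (R : realType) (m M k K : R) : 0 <= m -> m <= M -> 0 <= k -> k <= K -> m * k <= M * K.
Proof. by move=> m0 mM k0 kK; apply: ler_pM. Qed.

Theorem lemma4p9 (R : realType) (U : normedModType R) (X : completeNormedModType R)
  (Y : normedModType R) (A : {linear X -> X}) (B : {linear U -> X}) (C : {linear X -> Y})
  (cA : continuous A) (cB : continuous B) (cC : continuous C)
  (a alpha : R) (ha : 1 <= a)
  (hexp : forall t : R, 0 <= t -> opnorm (expop A t) <= a * expR (- (alpha * t)))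
  (beta : R) (hba : beta < alpha) :
  (IS_gain beta 0 1 (Sys A B C) <=
     (Num.max (a * opnorm B / (alpha - beta))
              (a * opnorm B * opnorm A / (alpha - beta) + opnorm B))%:E)%E /\
  (IO_gain beta 0 1 (Sys A B C) <=
     (Num.max (a * opnorm B * opnorm C / (alpha - beta))
              (a * opnorm B * opnorm A * opnorm C / (alpha - beta)
                 + opnorm B * opnorm C))%:E)%E.
Proof.
have [LA [LA0 hLA]] := lin_bound A cA.
have [MB [MB0 hMB]] := lin_bound B cB.
have [MC [MC0 hMC]] := lin_bound C cC.
have [nA0 hA] := opnormP A LA LA0 hLA.
have [nB0 hB] := opnormP B MB MB0 hMB.
have [nC0 hC] := opnormP C MC MC0 hMC.
set nA := opnorm A in nA0 hA *.
set nB := opnorm B in nB0 hB *.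
set nC := opnorm C in nC0 hC *.
have a0 : 0 <= a by apply: le_trans ha; exact: ler01.
have Hexp : forall tau, 0 <= tau -> forall z, `|expop A tau z| <= a * expR (- (alpha * tau)) * `|z|.
  move=> tau tau0 z; apply: (opnorm_use (expop A tau) (expR (`|tau| * LA))).
  - exact: expR_ge0.
  - by move=> w; apply: (E_bound LA0 hLA).
  - exact: hexp.
set g := alpha - beta.
have g0 : 0 < g by rewrite subr_gt0.
have key : forall (u : R -> U) (x : R -> X) (y : R -> Y), Sys A B C (u, x, y) ->
  exists dx : R -> X, [/\ {within `[(0:R), +oo[, continuous dx},
     (forall t, 0 <= t -> has_deriv_nonneg x t (dx t)),
     (forall t, 0 <= t -> y t = C (x t)) &
     forall du, is_Ck 0 u du -> forall t, 0 <= t ->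
       let Lm := Linf_max 0 du beta t in
       [/\ expR (beta * t) * `|x t| <= a * nB / g * Lm + a * `|x 0|,
           expR (beta * t) * `|dx t| <= (a * nB * nA / g + nB) * Lm + a * nA * `|x 0| &
           forall dw, is_Ck 1 x dw -> dw 0%N t = x t /\ dw 1%N t = dx t]].
  move=> u x y [cu cx cAx cy [dx [cdx hdx hdxe hy]]].
  exists dx; split => //.
  move=> du [du0 cdu _] t t0 Lm.
  set u0 := du 0%N.
  have hu : forall r, 0 <= r -> u0 r = u r by move=> r r0; exact: du0.
  have cu0 : {within `[(0:R), +oo[, continuous u0} by exact: cdu.
  have HK := @sup_facts R U u0 beta t t0 cu0.
  set Kt := sup _ in HK.
  have K0 : 0 <= Kt.
    by apply: le_trans (HK 0 (lexx _) t0); rewrite mulr_ge0 // expR_ge0.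
  have KL : Kt <= Lm by exact: Linf_ge.
  have hdx' : forall r, 0 <= r -> dx r = A (x r) + B (u0 r).
    by move=> r r0; rewrite hu // hdxe.
  have core := @core_bound R X U A LA LA0 hLA B nB a alpha beta nB0 hB a0 hba Hexp
     x dx u0 t Kt t0 (fun r r0 => hd_ED (hdx r r0)) hdx' HK.
  rewrite -/g in core.
  set P := expR (beta * t) * `|x t| in core *.
  have ep : 0 < expR (beta * t) by rewrite expR_gt0.
  have Q := HK t t0 (lexx _).
  have c1 : a * nB / g * Kt <= a * nB / g * Lm.
    by apply: ler_wpM2l => //; apply: divr_ge0; [exact: mulr_ge0 | exact: ltW].
  have c2 : (a * nB * nA / g + nB) * Kt <= (a * nB * nA / g + nB) * Lm.
    apply: ler_wpM2l => //; apply: addr_ge0 => //; apply: divr_ge0; last exact: ltW.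
    by apply: mulr_ge0 => //; exact: mulr_ge0.
  have e1 : a * nB * Kt / g = a * nB / g * Kt by rewrite mulrAC.
  split.
  - by apply: le_trans core _; rewrite e1 addrC lerD2r.
  - have D1 : expR (beta * t) * `|dx t| <= nA * P + nB * (expR (beta * t) * `|u0 t|).
      rewrite hdx' // /P mulrCA [nB * _]mulrCA -mulrDr; apply: ler_wpM2l; first exact: ltW.
      by apply: le_trans (ler_normD _ _) _; apply: lerD.
    apply: le_trans D1 _.
    have D2 : nA * P <= nA * (a * `|x 0| + a * nB * Kt / g) by apply: ler_wpM2l.
    have D3 : nB * (expR (beta * t) * `|u0 t|) <= nB * Kt by apply: ler_wpM2l.
    have D4 : nA * (a * `|x 0| + a * nB * Kt / g) + nB * Kt =
              (a * nB * nA / g + nB) * Kt + a * nA * `|x 0| by ring.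
    by apply: le_trans (lerD D2 D3) _; rewrite D4 lerD2r.
  - move=> dw [dw0 _ dwd]; split; first exact: dw0.
    have E1 : ED x t (dw 1%N t).
      apply: (@ED_ext R X (dw 0%N) x t (dw 1%N t) dw0 t0).
      exact: (hd_ED (dwd 0%N erefl t t0)).
    exact: (ED_unique t0 E1 (hd_ED (hdx t t0))).
have cg : 0 <= a * nB / g by apply: divr_ge0; [exact: mulr_ge0 | exact: ltW].
have cg2 : 0 <= a * nB * nA / g by apply: divr_ge0; [apply: mulr_ge0 => //; exact: mulr_ge0 | exact: ltW].
split.
- rewrite /IS_gain /gain; case: asboolP => [_|nP]; last first.
    exfalso; apply: nP => -[[u x] y] Hs _ /=.
    have [dx [cdx hdx _ _]] := key u x y Hs.
    case: Hs => _ cx _ _ _.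
    exists (fun j => if j is 0%N then x else dx); split => //.
    + by case => [|[|j]].
    + by case => [|j] // _ r r0; exact: hdx.
  apply: ereal_inf_lbound; exists (Num.max (a * nB / g) (a * nB * nA / g + nB)) => //.
  split; first by rewrite le_max cg.
  exists (fun s => a * `|s.1.2 0| * (1 + nA)); split.
    by move=> s _; rewrite mulr_ge0 // ?mulr_ge0 // addr_ge0.
  move=> [[u x] y] Hs du Hdu dw Hdw k hk t t0 /=.
  have [dx [_ _ hy Hb]] := key u x y Hs.
  have [Bx Bdx Hdw'] := Hb du Hdu t t0.
  have [e0 e1] := Hdw' dw Hdw.
  have L0 := Linf_ge0 du beta t.
  set Lm := Linf_max 0 du beta t in Bx Bdx L0 *.
  have x0 : 0 <= a * `|x 0| by rewrite mulr_ge0.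
  have xA : 0 <= a * nA * `|x 0| by rewrite mulr_ge0 // mulr_ge0.
  rewrite normrZ ger0_norm ?expR_ge0 //.
  case: k hk => [|[|k]] // _.
  + rewrite e0; apply: le_trans Bx _; apply: lerD.
      by apply: ler_wpM2r => //; rewrite le_max lexx.
    by rewrite mulrDr mulr1 lerDl mulrAC.
  + rewrite e1; apply: le_trans Bdx _; apply: lerD.
      by apply: ler_wpM2r => //; rewrite le_max lexx orbT.
    by rewrite mulrDr mulr1 mulrAC lerDr mulr_ge0.
- rewrite /IO_gain /gain; case: asboolP => [_|nP]; last first.
    exfalso; apply: nP => -[[u x] y] Hs _ /=.
    have [dx [cdx hdx hy _]] := key u x y Hs.
    case: Hs => _ _ _ cy _.
    exists (fun j => if j is 0%N then y else (fun r => C (dx r))); split => //.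
    + case => [|[|j]] // _.
      apply: (@within_continuous_comp _ _ _ `[(0:R), +oo[ dx C) => // z _; exact: cC.
    + case => [|j] // _ r r0; apply: ED_hd.
      apply: (@ED_ext R Y (fun r => C (x r)) y r (C (dx r))) => //.
        by move=> q q0; rewrite hy.
      exact: (ED_lin MC0 hMC (hd_ED (hdx r r0))).
  apply: ereal_inf_lbound.
  exists (Num.max (a * nB * nC / g) (a * nB * nA * nC / g + nB * nC)) => //.
  split; first by rewrite le_max; apply/orP; left; apply: divr_ge0; [rewrite !mulr_ge0 // | exact: ltW].
  exists (fun s => nC * (a * `|s.1.2 0| * (1 + nA))); split.
    by move=> s _; rewrite mulr_ge0 // mulr_ge0 // ?mulr_ge0 // addr_ge0.
  move=> [[u x] y] Hs du Hdu dw Hdw k hk t t0 /=.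
  have [dx [_ hdx hy Hb]] := key u x y Hs.
  have [Bx Bdx _] := Hb du Hdu t t0.
  case: Hdw => dw0 _ dwd.
  have e0 : dw 0%N t = C (x t) by rewrite dw0 //; exact: hy.
  have e1 : dw 1%N t = C (dx t).
    have E1 : ED y t (dw 1%N t).
      apply: (@ED_ext R Y (dw 0%N) y t (dw 1%N t) dw0 t0).
      exact: (hd_ED (dwd 0%N erefl t t0)).
    have E2 : ED y t (C (dx t)).
      apply: (@ED_ext R Y (fun r => C (x r)) y t (C (dx t))) => //.
        by move=> q q0; rewrite hy.
      exact: (ED_lin MC0 hMC (hd_ED (hdx t t0))).
    exact: (ED_unique t0 E1 E2).
  have L0 := Linf_ge0 du beta t.
  set Lm := Linf_max 0 du beta t in Bx Bdx L0 *.
  have x0 : 0 <= a * `|x 0| by rewrite mulr_ge0.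
  have xA : 0 <= a * nA * `|x 0| by rewrite mulr_ge0 // mulr_ge0.
  have ep : 0 <= expR (beta * t) by rewrite expR_ge0.
  rewrite normrZ ger0_norm //.
  case: k hk => [|[|k]] // _.
  + rewrite e0; apply: le_trans (_ : expR (beta * t) * (nC * `|x t|) <= _).
      by apply: ler_wpM2l => //; exact: hC.
    rewrite mulrCA; apply: le_trans (ler_wpM2l nC0 Bx) _.
    rewrite mulrDr; apply: lerD.
      rewrite mulrA [nC * _]mulrC; apply: ler_wpM2r => //.
      by rewrite le_max; apply/orP; left; rewrite mulrAC.
    by apply: ler_wpM2l => //; rewrite mulrDr mulr1 lerDl mulrAC.
  + rewrite e1; apply: le_trans (_ : expR (beta * t) * (nC * `|dx t|) <= _).
      by apply: ler_wpM2l => //; exact: hC.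
    rewrite mulrCA; apply: le_trans (ler_wpM2l nC0 Bdx) _.
    rewrite mulrDr; apply: lerD.
      rewrite mulrA [nC * _]mulrC; apply: ler_wpM2r => //.
      rewrite le_max; apply/orP; right.
      by rewrite mulrDl [nB * nC]mulrC mulrAC.
    by apply: ler_wpM2l => //; rewrite mulrDr mulr1 mulrAC lerDr mulr_ge0.
Qed.
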